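(* In the setting of the context, let $V$ be the exact output covariance matrix and $V_a$ the block-diagonal approximate covariance matrix. Then $$\|V-V_a\|^2\le e^{4r}N^4\big(\eta+2\sqrt{\eta}\big)^2,$$ where $\|\cdot\|$ is the Frobenius norm and $\eta=\max_\alpha\eta_\alpha$.
   Context: $M$ modes partitioned into $N$ disjoint sublattices $\mathcal L_1,\dots,\mathcal L_N$ (each of $M/N$ modes), each containing exactly one source mode $s_\alpha$. A passive linear-optical circuit with $M\times M$ unitary $U$ ($\hat a_j\mapsto\sum_kU_{jk}\hat a_k$) has real orthogonal symplectic representation $O$. Covariance conventions: $\hat x_j=(\hat a_j+\hat a_j^\dagger)/\sqrt2$, $\hat p_j=i(\hat a_j^\dagger-\hat a_j)/\sqrt2$, $V_{jk}=\tfrac12\mathrm{Tr}[\hat\rho\{\hat Q_j,\hat Q_k\}]$ with $\hat Q=(\hat x_1,\hat p_1,\dots,\hat x_M,\hat p_M)$, vacuum $=\mathbb 1/2$. Input: each source mode is a squeezed vacuum with parameter $r>0$ (covariance block $\tfrac12\mathrm{diag}(e^{2r},e^{-2r})$), all other modes vacuum; $V_{\mathrm{in}}$ is its covariance and $V=OV_{\mathrm{in}}O^T$. For each $\alpha$, let $V^{(\alpha)}_{\mathrm{in}}$ be the covariance with only $s_\alpha$ squeezed and all other modes vacuum, and let $v'_\alpha$ be the restriction of $OV^{(\alpha)}_{\mathrm{in}}O^T$ to the quadratures of modes in $\mathcal L_\alpha$. $V_a$ is the block-diagonal matrix (with respect to the sublattice partition) with diagonal blocks $v'_1,\dots,v'_N$,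 i.e. the covariance of the product state $\bigotimes_\alpha\hat\rho_\alpha$. The leakage rate of source $\alpha$ is $\eta_\alpha=\sum_{j\notin\mathcal L_\alpha}|U_{j,s_\alpha}|^2$. *)

(* Defs.v *)
From HB Require Import structures.
From mathcomp Require Import all_boot all_order all_algebra.
From mathcomp Require Import reals sequences exp.
From mathcomp Require Import complex.
Set Implicit Arguments. Unset Strict Implicit. Unset Printing Implicit Defensive.
Import Order.TTheory GRing.Theory Num.Theory.
Local Open Scope ring_scope.

Section Gaussian.
Variable R : realType.
Variable M : nat.

(* Quadrature index: (mode j, q) with q = 0 for x_j and q = 1 for p_j;
   Q = (x_1,p_1,...,x_M,p_M). Real 2M x 2M matrices are represented as
   functions on quadrature indices. *)
Definition quad := ('I_M * 'I_2)%type.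
Definition qmat := quad -> quad -> R.

Definition qmul (A B : qmat) : qmat := fun a b => \sum_(c : quad) A a c * B c b.
Definition qtr (A : qmat) : qmat := fun a b => A b a.

Definition frob2 (A : qmat) : R := \sum_(a : quad) \sum_(b : quad) A a b ^+ 2.

Definition unitary (U : 'M[R[i]]_M) : Prop :=
  U *m (map_mx (@conjc R) U)^T = 1%:M.

(* Real orthogonal symplectic representation of the passive circuit
   a_j -> sum_k U_jk a_k, acting on Q: x_j -> sum_k (Re U_jk x_k - Im U_jk p_k),
   p_j -> sum_k (Im U_jk x_k + Re U_jk p_k). *)
Definition symp_rep (U : 'M[R[i]]_M) : qmat := fun a b =>
  let u := U a.1 b.1 in
  match val a.2, val b.2 with
  | 0%N, 0%N => complex.Re u
  | 0%N, _ => - complex.Im u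
  | _, 0%N => complex.Im u
  | _, _ => complex.Re u
  end.

(* Input covariance: modes in S are squeezed vacua with block
   1/2 diag(e^{2r}, e^{-2r}); all other modes are vacuum (1/2 identity). *)
Definition cov_in (r : R) (S : pred 'I_M) : qmat := fun a b =>
  if a == b then
    (if a.1 \in S then (if val a.2 == 0%N then expR (2 * r) / 2
                                          else expR (- (2 * r)) / 2)
     else 1 / 2)
  else 0.

Definition cov_out (U : 'M[R[i]]_M) (Vin : qmat) : qmat :=
  qmul (qmul (symp_rep U) Vin) (qtr (symp_rep U)).

Variable N : nat.

Definition cov_exact (U : 'M[R[i]]_M) (r : R) (s : 'I_N -> 'I_M) : qmat :=
  cov_out U (cov_in r [pred j | [exists al, s al == j]]).

(* Block-diagonal approximation V_a: block alpha is the restriction to the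
   quadratures of L_alpha of O V_in^(alpha) O^T (only s_alpha squeezed). *)
Definition cov_approx (U : 'M[R[i]]_M) (r : R) (lat : 'I_M -> 'I_N)
    (s : 'I_N -> 'I_M) : qmat := fun a b =>
  if lat a.1 == lat b.1 then
    cov_out U (cov_in r (pred1 (s (lat a.1)))) a b
  else 0.

Definition leak (U : 'M[R[i]]_M) (lat : 'I_M -> 'I_N) (s : 'I_N -> 'I_M)
    (al : 'I_N) : R :=
  \sum_(j : 'I_M | lat j != al) (complex.Re (U j (s al)) ^+ 2 + complex.Im (U j (s al)) ^+ 2).

Definition max_leak (U : 'M[R[i]]_M) (lat : 'I_M -> 'I_N) (s : 'I_N -> 'I_M) : R :=
  \big[Num.max/0]_(al : 'I_N) leak U lat s al.

End Gaussian.

(* Main.v *)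
Require Import Defs.
From HB Require Import structures.
From mathcomp Require Import all_boot all_order all_algebra.
From mathcomp Require Import reals sequences exp.
From mathcomp Require Import complex.
From mathcomp Require Import ring lra.
Import Order.TTheory GRing.Theory Num.Theory.
Local Open Scope ring_scope.
Set Implicit Arguments. Unset Strict Implicit.

Lemma sum_sq_le (R : realFieldType) (I : finType) (x : I -> R) :
  (\sum_i x i) ^+ 2 <= #|I|%:R * \sum_i x i ^+ 2.
Proof.
have H : 0 <= \sum_i \sum_j (x i - x j) ^+ 2 by apply: sumr_ge0 => i _; apply: sumr_ge0 => j _; exact: sqr_ge0.
have A : #|I|%:R * \sum_i x i ^+ 2 = \sum_i \sum_(j : I) x i ^+ 2.
  by rewrite mulr_sumr; apply: eq_bigr => i _; rewrite sumr_const mulr_natl.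
have B : #|I|%:R * \sum_i x i ^+ 2 = \sum_(i : I) \sum_j x j ^+ 2.
  by rewrite sumr_const mulr_natl.
have C : (\sum_i x i) ^+ 2 = \sum_i \sum_j (x i * x j).
  by rewrite expr2 mulr_suml; apply: eq_bigr => i _; rewrite mulr_sumr.
have D : \sum_i \sum_j (x i - x j) ^+ 2 = \sum_i \sum_(j : I) x i ^+ 2 + \sum_(i : I) \sum_j x j ^+ 2 - 2 * \sum_i \sum_j (x i * x j).
  rewrite mulr_sumr -!big_split -sumrB /=; apply: eq_bigr => i _.
  rewrite mulr_sumr -!big_split -sumrB /=; apply: eq_bigr => j _.
  by rewrite sqrrB; ring.
lra.
Qed.

Lemma sum_quad (R : realType) (M : nat) (X : quad M -> R) :
  \sum_c X c = \sum_(j < M) (X (j, ord0) + X (j, ord_max)).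
Proof.
rewrite (eq_bigr (fun p : quad M => X (p.1, p.2))); last by case.
rewrite -(pair_bigA _ (fun j q => X (j, q))) /=.
apply: eq_bigr => j _; rewrite big_ord_recr big_ord1 /=.
by congr (X (j, _) + _); apply/val_inj.
Qed.

Lemma ReD (R : realType) (x y : R[i]) : complex.Re (x + y) = complex.Re x + complex.Re y.
Proof. by case: x; case: y. Qed.
Lemma ImD (R : realType) (x y : R[i]) : complex.Im (x + y) = complex.Im x + complex.Im y.
Proof. by case: x; case: y. Qed.
Lemma Re0 (R : realType) : complex.Re (0 : R[i]) = 0. Proof. by []. Qed.
Lemma Im0 (R : realType) : complex.Im (0 : R[i]) = 0. Proof. by []. Qed.

Lemma Re_sum (R : realType) (I : finType) (F : I -> R[i]) :
  complex.Re (\sum_i F i) = \sum_i complex.Re (F i).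
Proof. exact: (big_morph _ (@ReD R) (@Re0 R)). Qed.
Lemma Im_sum (R : realType) (I : finType) (F : I -> R[i]) :
  complex.Im (\sum_i F i) = \sum_i complex.Im (F i).
Proof. exact: (big_morph _ (@ImD R) (@Im0 R)). Qed.

Lemma col_norm (R : realType) (M : nat) (U : 'M[R[i]]_M) (k : 'I_M) (q : 'I_2) :
  unitary U -> \sum_a symp_rep U a (k, q) ^+ 2 = 1.
Proof.
move=> HU.
have H := mulmx1C HU.
have := congr1 (fun A : 'M[R[i]]_M => complex.Re (A k k)) H.
rewrite /= !mxE eqxx /= Re_sum => <-.
rewrite sum_quad; apply: eq_bigr => j _.
rewrite !mxE.
case: q => -[|[|q]] Hq //=; rewrite /symp_rep /=; case: (U j k) => x y /=; ring.
Qed.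

Lemma row_orth (R : realType) (M : nat) (U : 'M[R[i]]_M) (a b : quad M) :
  unitary U -> a != b -> \sum_c symp_rep U a c * symp_rep U b c = 0.
Proof.
move=> HU nab.
have E := congr1 (fun A : 'M[R[i]]_M => A a.1 b.1) HU.
move: E; rewrite /= !mxE => E.
have K1 : \sum_l (complex.Re (U a.1 l) * complex.Re (U b.1 l) + complex.Im (U a.1 l) * complex.Im (U b.1 l))
   = complex.Re ((a.1 == b.1)%:R : R[i]).
  rewrite -E Re_sum; apply: eq_bigr => l _; rewrite !mxE.
  by case: (U a.1 l) => x y; case: (U b.1 l) => z w /=; ring.
have K2 : \sum_l (complex.Im (U a.1 l) * complex.Re (U b.1 l) - complex.Re (U a.1 l) * complex.Im (U b.1 l))
   = complex.Im ((a.1 == b.1)%:R : R[i]).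
  rewrite -E Im_sum; apply: eq_bigr => l _; rewrite !mxE.
  by case: (U a.1 l) => x y; case: (U b.1 l) => z w /=; ring.
have R0 : forall n : nat, complex.Im (n%:R : R[i]) = 0.
  move=> n; elim: n => [|n IH]; first by rewrite mulr0n. by rewrite -addn1 natrD ImD IH add0r mulr1n.
rewrite sum_quad /symp_rep /=.
clear E; move: nab K1 K2; case: a => j [[|[|qa]] Ha] //; case: b => k [[|[|qb]] Hb] //= nab K1 K2.
- have njk : j != k.
    by apply: contra nab => /eqP ->; apply/eqP; congr pair; exact/val_inj.
  transitivity (complex.Re ((j == k)%:R : R[i])); last by rewrite (negbTE njk).
  by rewrite -K1; apply: eq_bigr => l _; ring.
- transitivity (- complex.Im ((j == k)%:R : R[i])); last by rewrite R0 oppr0.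
  by rewrite -K2 -sumrN; apply: eq_bigr => l _; ring.
- transitivity (complex.Im ((j == k)%:R : R[i])); last by rewrite R0.
  by rewrite -K2; apply: eq_bigr => l _; ring.
- have njk : j != k.
    by apply: contra nab => /eqP ->; apply/eqP; congr pair; exact/val_inj.
  transitivity (complex.Re ((j == k)%:R : R[i])); last by rewrite (negbTE njk).
  by rewrite -K1; apply: eq_bigr => l _; ring.
Qed.

Lemma leak_eq (R : realType) (M N : nat) (U : 'M[R[i]]_M) (lat : 'I_M -> 'I_N)
  (s : 'I_N -> 'I_M) (be : 'I_N) (q : 'I_2) :
  \sum_a (lat a.1 != be)%:R * symp_rep U a (s be, q) ^+ 2 = leak U lat s be.
Proof.
rewrite /leak sum_quad [in RHS]big_mkcond /=; apply: eq_bigr => j _.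
rewrite /symp_rep /=; case: (lat j != be); last by rewrite !mul0r addr0.
by case: q => -[|[|q]] Hq //=; ring.
Qed.

Definition dq {R : realType} (r : R) (q : 'I_2) : R :=
  (if val q == 0%N then expR (2 * r) / 2 else expR (- (2 * r)) / 2) - 1 / 2.

Lemma cov_out_in (R : realType) (M : nat) (U : 'M[R[i]]_M) (r : R) (S : pred 'I_M) (a b : quad M) :
  cov_out U (cov_in r S) a b =
  \sum_c symp_rep U a c * symp_rep U b c * (1 / 2 + (c.1 \in S)%:R * dq r c.2).
Proof.
rewrite /cov_out /qmul /qtr; apply: eq_bigr => c _.
rewrite (bigD1 c) //= big1 ?addr0; last first.
  by move=> c' /negbTE H; rewrite /cov_in H mulr0.
rewrite /cov_in eqxx /dq.
by case: (c.1 \in S); case: (val c.2 == 0%N); rewrite /=; ring.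
Qed.

Definition Fb {R : realType} {M N : nat} (U : 'M[R[i]]_M) (r : R) (s : 'I_N -> 'I_M)
  (be : 'I_N) (a b : quad M) : R :=
  \sum_c (c.1 == s be)%:R * (symp_rep U a c * symp_rep U b c * dq r c.2).

Lemma ind_sum (R : realType) (M N : nat) (lat : 'I_M -> 'I_N) (s : 'I_N -> 'I_M)
  (Hl : forall al, lat (s al) = al) (j : 'I_M) :
  ([exists al, s al == j])%:R = \sum_be (j == s be)%:R :> R.
Proof.
case: existsP => [[al /eqP <-] | H].
  rewrite (bigD1 al) //= eqxx big1 ?addr0 // => be nbe.
  case: eqP => // E; exfalso; move/eqP: nbe; apply.
  by rewrite -[be]Hl -E Hl.
rewrite big1 ?mulr0n //.
move=> be _; case: eqP => // E; exfalso; apply: H; exists be; by rewrite E eqxx.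
Qed.

Lemma exact_eq (R : realType) (M N : nat) (U : 'M[R[i]]_M) (r : R) (lat : 'I_M -> 'I_N) (s : 'I_N -> 'I_M)
  (Hl : forall al, lat (s al) = al) (a b : quad M) :
  cov_exact U r s a b = 1 / 2 * \sum_c symp_rep U a c * symp_rep U b c + \sum_be Fb U r s be a b.
Proof.
rewrite /cov_exact cov_out_in /Fb exchange_big /= mulr_sumr -big_split /=.
apply: eq_bigr => c _; rewrite inE (ind_sum R Hl) mulr_suml mulrDr mulr_sumr.
congr (_ + _); first ring.
by apply: eq_bigr => be _; ring.
Qed.

Lemma approx_eq (R : realType) (M N : nat) (U : 'M[R[i]]_M) (r : R) (lat : 'I_M -> 'I_N) (s : 'I_N -> 'I_M)
  (a b : quad M) :
  cov_approx U r lat s a b = if lat a.1 == lat b.1 then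
     1 / 2 * \sum_c symp_rep U a c * symp_rep U b c + Fb U r s (lat a.1) a b else 0.
Proof.
rewrite /cov_approx; case: ifP => // _.
rewrite cov_out_in /Fb mulr_sumr -big_split /=; apply: eq_bigr => c _.
rewrite inE; ring.
Qed.

Lemma diff_eq (R : realType) (M N : nat) (U : 'M[R[i]]_M) (r : R) (lat : 'I_M -> 'I_N) (s : 'I_N -> 'I_M)
  (Hl : forall al, lat (s al) = al) (HU : unitary U) (a b : quad M) :
  cov_exact U r s a b - cov_approx U r lat s a b =
  \sum_be (1 - (lat a.1 == be)%:R * (lat b.1 == be)%:R) * Fb U r s be a b.
Proof.
rewrite (exact_eq _ _ Hl) approx_eq; case: eqP => Hab.
  under [in RHS]eq_bigr => be _ do rewrite mulrBl mul1r.
  rewrite sumrB.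
  have -> : \sum_be (lat a.1 == be)%:R * (lat b.1 == be)%:R * Fb U r s be a b = Fb U r s (lat a.1) a b.
    rewrite (bigD1 (lat a.1)) //= -Hab eqxx mul1r mul1r big1 ?addr0 //.
    by move=> be /negbTE nbe; rewrite eq_sym nbe !mul0r.
  ring.
have nab : a != b by apply/eqP => E; apply: Hab; rewrite E.
rewrite (row_orth HU nab) mulr0 add0r subr0; apply: eq_bigr => be _.
case: (lat a.1 =P be) => [E|]; last by rewrite mul0r subr0 mul1r.
by rewrite (_ : (lat b.1 == be) = false) ?mulr0 ?subr0 ?mul1r //; apply/eqP => E'; apply: Hab; rewrite E E'.
Qed.

Lemma sum_I2 (R : realType) (Y : 'I_2 -> R) : \sum_q Y q = Y ord0 + Y ord_max.
Proof. by rewrite big_ord_recr big_ord1 /=; congr (Y _ + _); apply/val_inj. Qed.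

Lemma dq_sq (R : realType) (r : R) (q : 'I_2) : 0 < r -> dq r q ^+ 2 <= expR (4 * r) / 4.
Proof.
move=> r0.
have e1 := expR_ge1Dx (2 * r). have ef := expRxMexpNx_1 (2 * r).
have fpos := expR_gt0 (- (2 * r)).
have E4 : expR (4 * r) = expR (2 * r) ^+ 2.
  by rewrite (_ : 4 * r = 2 * r + 2 * r) ?expRD ?expr2 //; ring.
rewrite E4 /dq.
move: e1 ef fpos; set e := expR (2 * r); set f := expR (- (2 * r)) => e1 ef fpos.
case: (val q == 0%N); nra.
Qed.

Lemma Fb_eq (R : realType) (M N : nat) (U : 'M[R[i]]_M) (r : R) (s : 'I_N -> 'I_M) be a b :
  Fb U r s be a b = \sum_q (symp_rep U a (s be, q) * symp_rep U b (s be, q) * dq r q).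
Proof.
rewrite /Fb sum_quad sum_I2 (bigD1 (s be)) //= eqxx !mul1r big1 ?addr0 //.
by move=> j /negbTE ->; rewrite !mul0r addr0.
Qed.

Lemma block_bound (R : realType) (M N : nat) (U : 'M[R[i]]_M) (r : R) (lat : 'I_M -> 'I_N)
  (s : 'I_N -> 'I_M) (be : 'I_N) :
  unitary U -> 0 < r ->
  \sum_a \sum_b ((1 - (lat a.1 == be)%:R * (lat b.1 == be)%:R) * Fb U r s be a b) ^+ 2
  <= 2 * expR (4 * r) * leak U lat s be.
Proof.
move=> HU r0.
set K := expR (4 * r) / 4.
set c := fun a : quad M => (lat a.1 != be)%:R : R.
set w := fun (q : 'I_2) (a : quad M) => symp_rep U a (s be, q).
set L := leak U lat s be.
have T : forall q, \sum_a \sum_b (c a + c b) * (w q a ^+ 2 * w q b ^+ 2) = 2 * L.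
  move=> q.
  transitivity (\sum_a (c a * w q a ^+ 2 * (\sum_b w q b ^+ 2) + w q a ^+ 2 * (\sum_b c b * w q b ^+ 2))).
    apply: eq_bigr => a _; rewrite !mulr_sumr -big_split; apply: eq_bigr => b _ /=; ring.
  rewrite /w /c (col_norm (s be) q HU) (leak_eq U lat s be q) big_split /= -mulr_suml. rewrite -mulr_suml (leak_eq U lat s be q) (col_norm (s be) q HU).
  rewrite /L; ring.
have P : forall a b, ((1 - (lat a.1 == be)%:R * (lat b.1 == be)%:R) * Fb U r s be a b) ^+ 2
    <= (c a + c b) * (2 * K * (w ord0 a ^+ 2 * w ord0 b ^+ 2 + w ord_max a ^+ 2 * w ord_max b ^+ 2)).
  move=> a b.
  have c0 : 0 <= c a + c b by rewrite /c; apply: addr_ge0; apply: ler0n.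
  have F1 : Fb U r s be a b ^+ 2 <= 2 * K * (w ord0 a ^+ 2 * w ord0 b ^+ 2 + w ord_max a ^+ 2 * w ord_max b ^+ 2).
    apply: (le_trans (y := 2%:R * \sum_q (symp_rep U a (s be, q) * symp_rep U b (s be, q) * dq r q) ^+ 2)).
      by rewrite Fb_eq; have := sum_sq_le (fun q : 'I_2 => symp_rep U a (s be, q) * symp_rep U b (s be, q) * dq r q); rewrite card_ord.
    rewrite sum_I2 /w.
    have d0 := dq_sq (@ord0 1) r0; have d1 := dq_sq (@ord_max 1) r0.
    rewrite -/K in d0 d1.
    rewrite !exprMn.
    have h0 := sqr_ge0 (symp_rep U a (s be, ord0) * symp_rep U b (s be, ord0)).
    have h1 := sqr_ge0 (symp_rep U a (s be, ord_max) * symp_rep U b (s be, ord_max)).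
    rewrite !exprMn in h0 h1.
    nra.
  have C1 : (1 - (lat a.1 == be)%:R * (lat b.1 == be)%:R) ^+ 2 <= c a + c b :> R.
    rewrite /c; case: (lat a.1 == be); case: (lat b.1 == be); rewrite /= ?mulr1n ?mulr0n; lra.
  rewrite exprMn.
  apply: (le_trans (y := (c a + c b) * Fb U r s be a b ^+ 2)).
    by apply: ler_wpM2r => //; apply: sqr_ge0.
  by apply: ler_wpM2l.
apply: (le_trans (y := \sum_a \sum_b (c a + c b) * (2 * K * (w ord0 a ^+ 2 * w ord0 b ^+ 2 + w ord_max a ^+ 2 * w ord_max b ^+ 2)))).
  by apply: ler_sum => a _; apply: ler_sum => b _; apply: P.
have -> : \sum_a \sum_b (c a + c b) * (2 * K * (w ord0 a ^+ 2 * w ord0 b ^+ 2 + w ord_max a ^+ 2 * w ord_max b ^+ 2))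
   = 2 * K * (\sum_a \sum_b (c a + c b) * (w ord0 a ^+ 2 * w ord0 b ^+ 2)
              + \sum_a \sum_b (c a + c b) * (w ord_max a ^+ 2 * w ord_max b ^+ 2)).
  rewrite -big_split mulr_sumr; apply: eq_bigr => a _.
  rewrite -big_split mulr_sumr; apply: eq_bigr => b _ /=; ring.
rewrite !T /K; lra.
Qed.

Lemma final_ineq (R : realType) (n E eta : R) : 0 <= E -> 0 <= eta -> (n = 0 \/ 1 <= n) ->
  n * (2 * E * eta * n) <= E * n ^+ 4 * (eta + 2 * Num.sqrt eta) ^+ 2.
Proof.
move=> E0 e0 hn.
set t := Num.sqrt eta.
have t0 : 0 <= t by apply: sqrtr_ge0.
have et : eta = t ^+ 2 by rewrite sqr_sqrtr.
have A : n ^+ 2 <= n ^+ 4.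
  case: hn => [->|h]; first by rewrite expr0n /= expr0n.
  rewrite (_ : n ^+ 4 = n ^+ 2 * n ^+ 2); last by rewrite -exprD.
  rewrite ler_peMr ?sqr_ge0 //; rewrite -[1](expr1n _ 2); apply: lerXn2r => //; rewrite ?nnegrE //; lra.
have B : 2 * eta <= (eta + 2 * t) ^+ 2 by rewrite et; nra.
have -> : n * (2 * E * eta * n) = E * (n ^+ 2 * (2 * eta)) by rewrite expr2; ring.
rewrite -mulrA; apply: ler_wpM2l => //.
apply: ler_pM => //; [exact: sqr_ge0 | lra].
Qed.

Theorem lemma3 (R : realType) (M N : nat)
  (lat : 'I_M -> 'I_N) (s : 'I_N -> 'I_M) (U : 'M[R[i]]_M) (r : R) :
  (N %| M)%N ->
  (forall al : 'I_N, #|[set j | lat j == al]| = (M %/ N)%N) ->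
  (forall al : 'I_N, lat (s al) = al) ->
  unitary U ->
  0 < r ->
  frob2 (fun a b => cov_exact U r s a b - cov_approx U r lat s a b)
    <= expR (4 * r) * (N%:R) ^+ 4 *
       (max_leak U lat s + 2 * Num.sqrt (max_leak U lat s)) ^+ 2.
Proof.
move=> _ _ Hl HU r0.
set eta := max_leak U lat s.
have eta0 : 0 <= eta.
  rewrite /eta /max_leak; elim/big_ind: _ => [//| x y hx hy | be _].
    by rewrite le_max hx.
  by rewrite /leak; apply: sumr_ge0 => j _; apply: addr_ge0; apply: sqr_ge0.
have etab : forall be, leak U lat s be <= eta.
  by move=> be; rewrite /eta /max_leak (bigD1 be) //= le_max lexx.
rewrite /frob2.
under eq_bigr => a _ do under eq_bigr => b _ do rewrite (@diff_eq R M N U r lat s Hl HU a b).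
set G := fun be (a b : quad M) => ((1 - (lat a.1 == be)%:R * (lat b.1 == be)%:R) * Fb U r s be a b).
apply: (le_trans (y := \sum_a \sum_b N%:R * \sum_be G be a b ^+ 2)).
  apply: ler_sum => a _; apply: ler_sum => b _.
  by have := sum_sq_le (fun be => G be a b); rewrite card_ord.
have -> : \sum_a \sum_b N%:R * \sum_be G be a b ^+ 2 = N%:R * \sum_be \sum_a \sum_b G be a b ^+ 2.
  under eq_bigr => a _ do rewrite -mulr_sumr.
  rewrite -mulr_sumr; congr (_ * _).
  under eq_bigr => a _ do rewrite exchange_big.
  by rewrite exchange_big.
apply: (le_trans (y := N%:R * \sum_(be < N) (2 * expR (4 * r) * eta))).
  apply: ler_wpM2l; first exact: ler0n.
  apply: ler_sum => be _; apply: le_trans (@block_bound R M N U r lat s be HU r0) _.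
  by apply: ler_wpM2l => //; apply: mulr_ge0 => //; apply: ltW; apply: expR_gt0.
rewrite sumr_const card_ord.
have -> : (2 * expR (4 * r) * eta) *+ N = 2 * expR (4 * r) * eta * N%:R by rewrite mulr_natr.
apply: final_ineq => //; first exact: ltW (expR_gt0 _).
by case: (posnP N) => [-> | h]; [left | right; rewrite ler1n].
Qed.
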